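(* Let \(k\ge0\) and \(\lambda=(\lambda_1\ge\dots\ge\lambda_k\ge0)\). Then \[ \Sigma^{(k)}_\lambda=\bigsqcup_{J\succeq_k\lambda}\Sigma^{(k),\circ}_J, \] a disjoint union over strictly increasing sequences \(J\) of length at least \(k\) that \(k\)-dominate \(\lambda\).
   Context: \(\mathcal H\) is a separable infinite-dimensional complex Hilbert space with a fixed flag of closed subspaces \(\mathcal H=W_0\supset W_1\supset\cdots\), \(\mathrm{codim}_{\mathbb C}W_j=j\), \(\bigcap_jW_j=0\). \(\mathrm{Fred}_k\) denotes the bounded Fredholm operators of index \(k\). \(\Sigma^{(k)}_\lambda=\{T\in\mathrm{Fred}_k:\dim(\ker T\cap W_{\lambda_i+k-i})\ge i,\ i=1,\dots,k\}\). For \(J=(j_0<\dots<j_{r-1})\) of non-negative integers, an \(r\)-dimensional subspace \(V\) has exact type \(J\) if \(\dim(V\cap W_{j_q})=r-q\) and \(\dim(V\cap W_{j_q+1})=r-q-1\) for \(q=0,\dots,r-1\); \(\Sigma^{(k),\circ}_J=\{T\in\mathrm{Fred}_k:\ker T\text{ has exact type }J\}\). For \(J\) of length \(r\ge k\), \(J\succeq_k\lambda\) means \(j_{r-i}\ge\lambda_i+k-i\) for \(i=1,\dots,k\). *)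

(* Defs.v *)
From mathcomp Require Import all_boot all_order all_algebra.
From mathcomp Require Import complex.
From mathcomp Require Import all_classical all_reals all_analysis.
Set Implicit Arguments.
Unset Strict Implicit.
Unset Printing Implicit Defensive.
Import Order.TTheory GRing.Theory Num.Theory.
Import numFieldNormedType.Exports.
Local Open Scope classical_set_scope.
Local Open Scope ring_scope.
Local Open Scope complex_scope.

Section FredholmDefs.
Context (R : realType) (H : completeNormedModType R[i]).

Definition lcomb (n : nat) (c : 'I_n -> R[i]) (v : 'I_n -> H) : H :=
  \sum_(i < n) c i *: v i.

Definition lin_indep (n : nat) (v : 'I_n -> H) : Prop :=
  forall c : 'I_n -> R[i], lcomb c v = 0 -> forall i, c i = 0.

Definition is_subspace (V : set H) : Prop :=
  V 0 /\ (forall x y, V x -> V y -> V (x + y)) /\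
  (forall (a : R[i]) x, V x -> V (a *: x)).

Definition dim_ge (V : set H) (n : nat) : Prop :=
  exists v : 'I_n -> H, lin_indep v /\ forall i, V (v i).

Definition dim_eq (V : set H) (n : nat) : Prop :=
  is_subspace V /\
  exists v : 'I_n -> H, [/\ lin_indep v, (forall i, V (v i)) &
                            (forall x, V x -> exists c, x = lcomb c v)].

(* W is a subspace of codimension exactly n : H = W (+) span(v_1..v_n) *)
Definition codim_eq (W : set H) (n : nat) : Prop :=
  is_subspace W /\
  exists v : 'I_n -> H,
    (forall c, W (lcomb c v) -> forall i, c i = 0) /\
    (forall x, exists c, W (x - lcomb c v)).

(* H is a separable, infinite-dimensional complex Hilbert space:
   its norm comes from an inner product, it is complete (by its type),
   it has a countable dense subset, and it is infinite-dimensional. *)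
Definition sep_inf_hilbert : Prop :=
  (exists ip : H -> H -> R[i],
     [/\ (forall (a : R[i]) x y z, ip (a *: x + y) z = a * ip x z + ip y z),
         (forall x y, ip y x = (ip x y)^*) &
         (forall x, ip x x = `|x| ^+ 2)]) /\
  (exists u : nat -> H, closure (range u) = setT) /\
  (forall n, exists v : 'I_n -> H, lin_indep v).

Definition is_flag (W : nat -> set H) : Prop :=
  [/\ W 0%N = setT,
      (forall j, closed (W j) /\ codim_eq (W j) j),
      (forall j, W j.+1 `<=` W j) &
      \bigcap_j W j = [set 0]].

Definition ker (T : H -> H) : set H := [set x | T x = 0].

Definition bounded_linear (T : H -> H) : Prop :=
  (forall (a : R[i]) x y, T (a *: x + y) = a *: T x + T y) /\ continuous T.

Definition Fred (k : int) (T : H -> H) : Prop :=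
  bounded_linear T /\
  exists m n : nat, [/\ dim_eq (ker T) m, closed (range T),
                        codim_eq (range T) n & k = m%:Z - n%:Z].

(* lambda is given as the list [:: lambda_1; ...; lambda_k] *)
Definition lam_at (lam : seq nat) (i : nat) : nat := nth 0%N lam i.-1.

Definition Sigma (W : nat -> set H) (k : nat) (lam : seq nat) (T : H -> H) : Prop :=
  Fred k%:Z T /\
  forall i : nat, (0 < i <= k)%N ->
    dim_ge (ker T `&` W (lam_at lam i + k - i)%N) i.

Definition exact_type (W : nat -> set H) (V : set H) (J : seq nat) : Prop :=
  dim_eq V (size J) /\
  forall q : nat, (q < size J)%N ->
    dim_eq (V `&` W (nth 0%N J q)) (size J - q)%N /\
    dim_eq (V `&` W (nth 0%N J q).+1) (size J - q - 1)%N.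

Definition SigmaO (W : nat -> set H) (k : nat) (J : seq nat) (T : H -> H) : Prop :=
  Fred k%:Z T /\ exact_type W (ker T) J.

End FredholmDefs.

Definition kdom (k : nat) (J lam : seq nat) : Prop :=
  (k <= size J)%N /\
  forall i : nat, (0 < i <= k)%N ->
    (lam_at lam i + k - i <= nth 0%N J (size J - i))%N.

Definition union_index (k : nat) (lam J : seq nat) : Prop :=
  sorted ltn J /\ kdom k J lam.

(* Main.v *)
Require Import Defs.
From mathcomp Require Import all_boot all_order all_algebra.
From mathcomp Require Import complex.
From mathcomp Require Import all_classical all_reals all_analysis.
From mathcomp Require Import zify.
From Stdlib Require Import Classical.
Import GRing.Theory.
Local Open Scope classical_set_scope.

Section LA.
Variables (R : realType) (H : completeNormedModType R[i]).
Local Set Implicit Arguments.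
Local Open Scope ring_scope.

Lemma subspace_lcomb (S : set H) n (c : 'I_n -> R[i]) v :
  is_subspace S -> (forall i, S (v i)) -> S (lcomb c v).
Proof.
move=> [S0 [SD SZ]] Sv; rewrite /lcomb; apply: (big_ind S) => // i _; exact: SZ.
Qed.

Lemma subspaceB (S : set H) x y : is_subspace S -> S x -> S y -> S (x - y).
Proof.
move=> [S0 [SD SZ]] Sx Sy; rewrite -scaleN1r; apply: SD => //; exact: SZ.
Qed.

Lemma subspaceI (S T : set H) : is_subspace S -> is_subspace T -> is_subspace (S `&` T).
Proof.
move=> [S0 [SD SZ]] [T0 [TD TZ]]; split; first by [].
split; first by move=> x y [? ?] [? ?]; split; [apply: SD | apply: TD].
by move=> a x [? ?]; split; [apply: SZ | apply: TZ].
Qed.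

Lemma lcomb_scale n a (c : 'I_n -> R[i]) (v : 'I_n -> H) :
  lcomb (fun i => a * c i) v = a *: lcomb c v.
Proof. by rewrite /lcomb scaler_sumr; apply: eq_bigr => i _; rewrite scalerA. Qed.

Lemma lcomb_comp n m (c : 'I_n -> R[i]) (d : 'I_n -> 'I_m -> R[i]) (B : 'I_m -> H) :
  lcomb c (fun k => lcomb (d k) B) = lcomb (fun j => \sum_k c k * d k j) B.
Proof.
rewrite /lcomb; under eq_bigr do rewrite scaler_sumr.
rewrite exchange_big; apply: eq_bigr => j _; rewrite scaler_suml.
by apply: eq_bigr => k _; rewrite scalerA.
Qed.

Lemma lcomb0 n (v : 'I_n -> H) : lcomb (fun _ => 0) v = 0.
Proof. by rewrite /lcomb big1 // => i _; rewrite scale0r. Qed.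

Lemma kernel_family (S : set H) (hS : is_subspace S) n m (F : 'I_n -> H)
  (v : 'I_m -> H) : (forall i, exists c, S (F i - lcomb c v)) ->
  exists r (Km : 'M[R[i]]_(r, n)),
   [/\ row_free Km, (n <= r + m)%N & forall k, S (lcomb (fun i => Km k i) F)].
Proof.
move=> hF; case: (choice hF) => cf hcf.
pose M := \matrix_(i < n, j < m) cf i j.
exists (\rank (kermx M)), (row_base (kermx M)); split.
- exact: row_base_free.
- rewrite mxrank_ker; have := rank_leq_col M; lia.
- move=> k; set Kb := row_base (kermx M).
  have KM : Kb *m M = 0.
    have /submxP [D ->] : (Kb <= kermx M)%MS by rewrite eq_row_base.
    by rewrite -mulmxA mulmx_ker mulmx0.
  clearbody Kb.
  have -> : lcomb (fun i => Kb k i) F =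
     lcomb (fun i => Kb k i) (fun i => F i - lcomb (cf i) v)
     + \sum_(j < m) (Kb *m M) k j *: v j.
    rewrite /lcomb.
    under [X in _ = _ + X]eq_bigr => j _ do rewrite mxE scaler_suml.
    rewrite exchange_big /= -big_split /=; apply: eq_bigr => i _.
    under [X in _ = _ + X]eq_bigr => j _ do rewrite mxE -scalerA.
    by rewrite -scaler_sumr -scalerDr subrK.
  rewrite KM; under [X in S (_ + X)]eq_bigr => j _ do rewrite mxE scale0r.
  rewrite big1_eq addr0; apply: subspace_lcomb => //.
Qed.

Lemma zero_subspace : is_subspace ([set 0] : set H).
Proof.
split; first by [].
split; first by move=> x y /= -> ->; rewrite addr0.
by move=> a x /= ->; rewrite scaler0.
Qed.

Lemma indep_bound n m (x : 'I_n -> H) (v : 'I_m -> H) :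
  lin_indep x -> (forall i, exists c, x i = lcomb c v) -> (n <= m)%N.
Proof.
move=> hx hv.
have [r [Km [Kfree hnr hK]]] := kernel_family zero_subspace x v
  (fun i => let: ex_intro c hc := hv i in ex_intro _ c (etrans (f_equal (fun y => y - _) hc) (subrr _))).
have Kz : Km = 0.
  apply/matrixP => k i; rewrite mxE; exact: (hx _ (hK k) i).
move: Kfree; rewrite /row_free Kz mxrank0 => /eqP r0; lia.
Qed.

Lemma split_l n m (j : 'I_n) : fintype.split (lshift m j) = inl j.
Proof. exact: (unsplitK (inl j)). Qed.
Lemma split_r n m (j : 'I_m) : fintype.split (rshift n j) = inr j.
Proof. exact: (unsplitK (inr j)). Qed.

Definition extf n (b : 'I_n -> H) (x : H) : 'I_(n + 1) -> H :=
  fun i => match fintype.split i with inl j => b j | inr _ => x end.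

Lemma ext_indep n (b : 'I_n -> H) x : lin_indep b ->
  ~ (exists c, x = lcomb c b) -> lin_indep (extf b x).
Proof.
move=> hb hx c hc.
rewrite /lcomb big_split_ord /= big_ord1 /extf split_r in hc.
rewrite (eq_bigr (fun i => c (lshift 1 i) *: b i)) in hc; last by move=> i _; rewrite split_l.
set c0 := c (rshift n ord0) in hc.
have c00 : c0 = 0.
  apply/eqP; apply: contraT => nz; exfalso; apply: hx.
  exists (fun i => - c0^-1 * c (lshift 1 i)).
  have := hc; rewrite addrC => /eqP; rewrite addr_eq0 => /eqP hx'.
  rewrite lcomb_scale -[x]scale1r -(mulVf nz) -scalerA hx' scalerN -scaleNr.
  by [].
rewrite c00 scale0r addr0 in hc.
have hl := hb _ hc.
move=> i; rewrite -(splitK i); case: (fintype.split i) => j /=; first exact: hl.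
by rewrite (ord1 j).
Qed.

Lemma basis_exists (V S : set H) m : dim_eq V m -> is_subspace S ->
  S `<=` V -> exists n, dim_eq S n.
Proof.
move=> [_ [b [bi bV bsp]]] hS SV.
pose P n := exists e : 'I_n -> H, lin_indep e /\ forall i, S (e i).
have Pb : forall n, P n -> (n <= m)%N.
  move=> n [e [ei eS]]; exact: (indep_bound ei (fun i => bsp _ (SV _ (eS i)))).
have P0 : P 0%N by exists (fun _ => 0); split; [move=> c _ [] | move=> []].
have [n [Pn nPn1]] : exists n, P n /\ ~ P n.+1.
  apply: NNPP => hn.
  have allP : forall j, P j.
    elim => // j IH; apply: NNPP => hj; apply: hn; by exists j.
  by have := Pb _ (allP m.+1); rewrite ltnn.
case: Pn => e [ei eS]; exists n; split => //; exists e; split => // x Sx.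
apply: NNPP => nx; apply: nPn1; rewrite /P -addn1.
exists (extf e x); split; first exact: ext_indep.
by move=> i; rewrite /extf; case: (fintype.split i).
Qed.

Lemma dim_unique (S : set H) n n' : dim_eq S n -> dim_eq S n' -> n = n'.
Proof.
move=> [_ [b [bi bS bsp]]] [_ [b' [bi' bS' bsp']]]; apply/eqP; rewrite eqn_leq.
by rewrite (indep_bound bi (fun i => bsp' _ (bS i))) (indep_bound bi' (fun i => bsp _ (bS' i))).
Qed.

Lemma dim_mono (S T : set H) n n' : S `<=` T -> dim_eq S n -> dim_eq T n' -> (n <= n')%N.
Proof.
move=> ST [_ [b [bi bS bsp]]] [_ [b' [bi' bS' bsp']]].
exact: (indep_bound bi (fun i => bsp' _ (ST _ (bS i)))).
Qed.

Lemma dimge_le (S : set H) n n' : dim_ge S n -> dim_eq S n' -> (n <= n')%N.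
Proof.
move=> [b [bi bS]] [_ [b' [bi' bS' bsp']]].
exact: (indep_bound bi (fun i => bsp' _ (bS i))).
Qed.

Lemma dim_eq_sub (S T : set H) n : S `<=` T -> dim_eq S n -> dim_eq T n -> T `<=` S.
Proof.
move=> ST [hS [b [bi bS bsp]]] [_ [b' [bi' bS' bsp']]] x Tx.
apply: NNPP => nSx.
have nsp : ~ (exists c, x = lcomb c b).
  by move=> [c hc]; apply: nSx; rewrite hc; apply: subspace_lcomb.
have hT : forall i, T (extf b x i).
  by move=> i; rewrite /extf; case: (fintype.split i) => j //; apply: ST.
have := indep_bound (ext_indep bi nsp) (fun i => bsp' _ (hT i)).
by rewrite addn1 ltnn.
Qed.

Lemma dim_zero (S : set H) n : dim_eq S n -> S `<=` [set 0] -> n = 0%N.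
Proof.
move=> [_ [b [bi bS _]]] S0; case: n b bi bS => // n b bi bS.
have : lcomb (fun _ => 1) b = 0.
  by rewrite /lcomb big1 // => i _; rewrite (S0 _ (bS i)) scaler0.
move/bi => /(_ ord0) /eqP; by rewrite oner_eq0.
Qed.

Lemma step_le (V : set H) (hV : is_subspace V) (W1 W2 : set H) a p e :
  codim_eq W1 a -> codim_eq W2 a.+1 -> W2 `<=` W1 ->
  dim_eq (V `&` W1) p -> dim_eq (V `&` W2) e -> (p <= e.+1)%N.
Proof.
move=> [hW1 [u [uind _]]] [hW2 [v [_ vsp]]] W21 [_ [B [Bi BVW Bsp]]]
  [_ [C [Ci CVW Csp]]].
pose F : 'I_(p + a) -> H := fun i => match fintype.split i with inl j => B j | inr j => u j end.
have [r [Km [Kfree hr hK]]] := kernel_family hW2 F v (fun i => vsp (F i)).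
have eF : forall k, lcomb (fun i => Km k i) F =
   lcomb (fun j => Km k (lshift a j)) B + lcomb (fun j => Km k (rshift p j)) u.
  move=> k; rewrite /lcomb big_split_ord /=; congr (_ + _); apply: eq_bigr => j _;
  by rewrite /F ?split_l ?split_r.
have hu : forall k (j : 'I_a), Km k (rshift p j) = 0.
  move=> k; apply: uind.
  have -> : lcomb (fun j => Km k (rshift p j)) u =
     lcomb (fun i => Km k i) F - lcomb (fun j => Km k (lshift a j)) B.
    by rewrite eF [X in X - _]addrC addrK.
  apply: subspaceB => //; first exact: W21 (hK k).
  by apply: subspace_lcomb => // i; case: (BVW i).
pose y : 'I_r -> H := fun k => lcomb (fun j => Km k (lshift a j)) B.
have yin : forall k, (V `&` W2) (y k).
  move=> k; split; first by apply: subspace_lcomb => // i; case: (BVW i).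
  have := hK k; rewrite eF.
  have -> : lcomb (fun j => Km k (rshift p j)) u = 0.
    by rewrite -(lcomb0 u); congr lcomb; apply: funext => j; rewrite hu.
  by rewrite addr0.
have yind : lin_indep y.
  move=> c hc; pose cr := \row_k c k.
  have : cr *m Km = 0 *m Km.
    rewrite mul0mx; apply/rowP => i; rewrite !mxE -(splitK i).
    case: (fintype.split i) => j /=.
    - rewrite /y lcomb_comp in hc.
      rewrite -[RHS](Bi _ hc j).
      by apply: eq_bigr => k _; rewrite mxE.
    - by rewrite big1 // => k _; rewrite hu mulr0.
  move/(row_free_inj Kfree) => /rowP h k.
  by have := h k; rewrite !mxE.
have rle : (r <= e)%N := indep_bound yind (fun k => Csp _ (yin k)).
lia.
Qed.

End LA.
Lemma jumps m (d : nat -> nat) : d 0 = m -> (forall a, d a.+1 <= d a) ->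
  (forall a, d a <= (d a.+1).+1) -> (exists N, d N = 0) ->
  exists J : seq nat, [/\ sorted ltn J, size J = m &
    forall q, q < m -> d (nth 0 J q) = m - q /\ d (nth 0 J q).+1 = m - q - 1].
Proof.
move=> d0 dmon dstep [N dN].
have dmono : forall a b, a <= b -> d b <= d a.
  move=> a b /subnK <-; elim: (b - a) => [|c IH] //=.
  by rewrite addSn; apply: leq_trans (dmon _) IH.
have ex : forall q, exists a, (d a.+1 < m - q) || (m <= q).
  move=> q; exists N; have := dmono _ _ (leqnSn N); rewrite dN.
  case: (leqP m q) => h; first by rewrite orbT.
  rewrite orbF; lia.
pose j q := ex_minn (ex q).
have key : forall q, q < m -> d (j q) = m - q /\ d (j q).+1 = m - q - 1.
  move=> q qm; rewrite /j; case: ex_minnP => a ha hmin.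
  have ha' : d a.+1 < m - q by move: ha; case: leqP qm => // _ _; rewrite orbF.
  have da : m - q <= d a.
    case: a ha ha' hmin => [|a] _ _ hmin; first by rewrite d0 leq_subr.
    rewrite leqNgt; apply/negP => h.
    have := hmin a; rewrite h /= => /(_ isT); by rewrite ltnn.
  have := dstep a; lia.
exists (mkseq j m); split.
- rewrite /mkseq; apply: (homo_sorted_in (P := fun q => q < m)); last first.
  + exact: iota_ltn_sorted.
  + by apply/allP => q; rewrite mem_iota.
  move=> q q' qm q'm /= qq'.
  rewrite ltnNge; apply/negP => h.
  have := dmono _ _ h; have [-> _] := key _ qm; have [-> _] := key _ q'm.
  move: qm q'm qq'; rewrite /in_mem /=; lia.
- by rewrite size_mkseq.
- by move=> q qm; rewrite nth_mkseq //; exact: key.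
Qed.

Theorem lemma4p13 (R : realType) (H : completeNormedModType R[i])
  (hH : sep_inf_hilbert H) (W : nat -> set H) (hW : is_flag W)
  (k : nat) (lam : seq nat) (hsize : size lam = k) (hdec : sorted geq lam) :
  (forall T : H -> H,
     Sigma W k lam T <-> exists J : seq nat, union_index k lam J /\ SigmaO W k J T) /\
  (forall (J1 J2 : seq nat) (T : H -> H),
     union_index k lam J1 -> union_index k lam J2 ->
     SigmaO W k J1 T -> SigmaO W k J2 T -> J1 = J2).
Proof.
case: hW => W0 hWj hWs hWcap.
have fmono : forall a b, (a <= b)%N -> W b `<=` W a.
  move=> a b /subnK <-; elim: (b - a) => [|c IH] x hx; first by [].
  rewrite addSn in hx; exact: IH _ (hWs _ _ hx).
have hWsub : forall a, is_subspace (W a) := fun a => (hWj a).2.1.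
split.
- move=> T; split.
  + move=> [hF hS]; have hF' := hF; case: hF' => _ [m [n [hdm _ _ hk]]].
    have kle : (k <= m)%N by lia.
    set V := ker T in hdm *.
    have hV := hdm.1.
    have dex : forall a, exists e, dim_eq (V `&` W a) e.
      move=> a; apply: (basis_exists hdm); [exact: subspaceI | by move=> x []].
    case: (choice dex) => d hd.
    have d0 : d 0%N = m by apply: (dim_unique (hd 0%N)); rewrite W0 setIT.
    have dmon : forall a, (d a.+1 <= d a)%N.
      by move=> a; apply: (dim_mono _ (hd a.+1) (hd a)) => x [? ?]; split => //; apply: hWs.
    have dstep : forall a, (d a <= (d a.+1).+1)%N :=
      fun a => step_le hV (hWj a).2 (hWj a.+1).2 (hWs a) (hd a) (hd a.+1).
    have dmono : forall a b, (a <= b)%N -> (d b <= d a)%N.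
      move=> a b /subnK <-; elim: (b - a) => [|c IH] //=.
      by rewrite addSn; apply: leq_trans (dmon _) IH.
    have stab : forall v a, (d a <= v)%N -> exists N, forall b, (N <= b)%N -> d b = d N.
      elim=> [|v IH] a hav.
      * exists a => b ab; have := dmono _ _ ab; lia.
      * case: (classic (forall b, (a <= b)%N -> d b = d a)) => [h|h]; first by exists a.
        have [b hb] : exists b, ~ ((a <= b)%N -> d b = d a).
          apply: NNPP => hn; apply: h => b; apply: NNPP => hb; apply: hn; by exists b.
        have ab : (a <= b)%N.
          apply: NNPP => nab; apply: hb => ab; by exfalso; apply: nab.
        have nb : d b <> d a by move=> e; apply: hb => _.
        apply: (IH b); have := dmono _ _ ab; lia.
    have [N hN] := stab _ 0%N (leqnn _).
    have dN : d N = 0%N.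
      apply: (dim_zero (hd N)) => x [Vx WNx]; rewrite -hWcap => j _.
      case: (leqP j N) => jN; first exact: fmono _ _ jN _ WNx.
      have sub : (V `&` W j) `<=` (V `&` W N).
        by move=> y [? ?]; split => //; apply: fmono (ltnW jN) _ _.
      have hdj := hd j; rewrite (hN j (ltnW jN)) in hdj.
      by have [] := dim_eq_sub sub hdj (hd N) x (conj Vx WNx).
    have [J [Jsort Jsz Jkey]] := jumps _ _ d0 dmon dstep (ex_intro _ N dN).
    exists J; split.
    * split => //; split; first by rewrite Jsz.
      move=> i hi; rewrite Jsz.
      have qm : (m - i < m)%N by lia.
      have [_ h2] := Jkey _ qm.
      have hdi := dimge_le (hS i hi) (hd _).
      rewrite leqNgt; apply/negP => hlt.
      have := dmono _ _ hlt; rewrite h2; lia.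
    * split => //; split; first by rewrite Jsz.
      move=> q; rewrite Jsz => qm; have [h1 h2] := Jkey _ qm.
      by split; [rewrite -h1 | rewrite -h2]; apply: hd.
  + move=> [J [[Jsort [kle hJ]] [hF [hdJ heJ]]]]; split => // i hi.
    have hi' := hJ i hi.
    have qlt : (size J - i < size J)%N by lia.
    have [hq _] := heJ _ qlt.
    rewrite subKn in hq; last lia.
    case: hq => _ [b [bi bS _]]; exists b; split => // j.
    case: (bS j) => h1 h2; split => //; exact: fmono _ _ hi' _ h2.
- move=> J1 J2 T _ _ [_ [hd1 he1]] [_ [hd2 he2]].
  have sz := dim_unique hd1 hd2.
  apply: (@eq_from_nth _ 0%N) => // q qlt.
  have qlt2 : (q < size J2)%N by rewrite -sz.
  have [a1 b1] := he1 q qlt; have [a2 b2] := he2 q qlt2.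
  case: (ltngtP (nth 0%N J1 q) (nth 0%N J2 q)) => // h.
  * have := dim_mono (fun x (hx : (ker T `&` W (nth 0%N J2 q)) x) =>
      conj hx.1 (fmono _ _ h _ hx.2)) a2 b1; lia.
  * have := dim_mono (fun x (hx : (ker T `&` W (nth 0%N J1 q)) x) =>
      conj hx.1 (fmono _ _ h _ hx.2)) a1 b2; lia.
Qed.
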